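(* For each integer $N\ge 1$, let $S_N^{\mathrm{quant}}$ be the $N\times N$ real matrix with entries \[ (S_N^{\mathrm{quant}})_{m,n} = \frac{\sin\frac{\pi}{N}}{\sin \frac{\pi}{N}(m+n-1)} \quad (m+n\neq N+1), \qquad (S_N^{\mathrm{quant}})_{m,n}=0 \quad (m+n=N+1), \] $m,n=1,\dots,N$ (so the entries on the anti-diagonal are zero). Then the set of eigenvalues of $S_N^{\mathrm{quant}}$ is \[ \left\{ (N-1)\sin\tfrac{\pi}{N},\ (N-3)\sin\tfrac{\pi}{N},\ \ldots,\ (3-N)\sin\tfrac{\pi}{N},\ (1-N)\sin\tfrac{\pi}{N}\right\}, \] i.e. $\{(N+1-2k)\sin\frac{\pi}{N} : k=1,\dots,N\}$. *)

(* Defs.v *)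
From HB Require Import structures.
From mathcomp Require Import all_boot all_order all_algebra.
From mathcomp Require Import all_classical all_reals all_analysis.
Set Implicit Arguments. Unset Strict Implicit. Unset Printing Implicit Defensive.
Import Order.TTheory GRing.Theory Num.Theory.
Local Open Scope ring_scope.

Definition S_quant (R : realType) (N : nat) : 'M[R]_N :=
  \matrix_(i < N, j < N)
    if (i.+1 + j.+1 == N.+1)%N then 0
    else sin (pi / N%:R) / sin (pi / N%:R * ((i.+1 + j.+1 - 1)%N)%:R).

(* Main.v *)
Require Import Defs.
From HB Require Import structures.
From mathcomp Require Import all_boot all_order all_algebra.
From mathcomp Require Import all_classical all_reals all_analysis.
From mathcomp Require Import ring lra zify.
Import Order.TTheory GRing.Theory Num.Theory.
Local Open Scope ring_scope.

Lemma cos_addnpi (R : realType) (x : R) (n : nat) :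
  cos (x + n%:R * pi) = (-1) ^+ n * cos x.
Proof.
elim: n => [|n IH]; first by rewrite mul0r addr0 expr0 mul1r.
by rewrite -addn1 natrD mulrDl mul1r addrA cosDpi IH exprD expr1; ring.
Qed.

Lemma sin_addnpi (R : realType) (x : R) (n : nat) :
  sin (x + n%:R * pi) = (-1) ^+ n * sin x.
Proof.
elim: n => [|n IH]; first by rewrite mul0r addr0 expr0 mul1r.
by rewrite -addn1 natrD mulrDl mul1r addrA sinDpi IH exprD expr1; ring.
Qed.

Definition th (R : realType) (N : nat) : R := pi / N%:R.
Definition ff (R : realType) (N : nat) (j : nat) : R :=
  sin (th R N) / sin (th R N * j%:R).

Lemma thN (R : realType) N : (0 < N)%N -> th R N * N%:R = pi.
Proof. by move=> hN; rewrite /th divfK // pnatr_eq0 -lt0n. Qed.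

Lemma ff_per (R : realType) N j : (0 < N)%N -> ff R N (j + N) = - ff R N j.
Proof.
move=> hN; rewrite /ff natrD mulrDr thN // sinDpi invrN mulrN //.
Qed.

Lemma ff_refl (R : realType) N j : (0 < N)%N -> (j <= N)%N ->
  ff R N (N - j) = ff R N j.
Proof.
move=> hN hj; rewrite /ff natrB // mulrBr thN //.
have -> : pi - th R N * j%:R = - (th R N * j%:R) + 1%:R * pi by ring.
by rewrite sin_addnpi sinN expr1; congr (_ / _); ring.
Qed.

Lemma ff0 (R : realType) N : ff R N 0 = 0.
Proof. by rewrite /ff mulr0 sin0 invr0 mulr0. Qed.

Lemma ffN (R : realType) N : (0 < N)%N -> ff R N N = 0.
Proof. by move=> hN; rewrite /ff thN // sinpi invr0 mulr0. Qed.

Lemma window (R : realType) (N : nat) (G : nat -> R) :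
  (forall j, G (j + N)%N = G j) ->
  forall i, \sum_(n < N) G (i + n)%N = \sum_(n < N) G n.
Proof.
move=> hG; elim=> [|i IH]; first by apply: eq_bigr => n _; rewrite add0n.
case: N hG IH => [|M] hG IH; first by rewrite !big_ord0.
rewrite -IH big_ord_recr big_ord_recl /=.
rewrite addrC; congr (_ + _); last by apply: eq_bigr => n _; rewrite /= addSnnS.
by rewrite addn0 addSnnS hG.
Qed.
Definition ph (R : realType) N (l : nat) : R := th R N * (l.*2.+1)%:R.
Definition GG (R : realType) N l (j : nat) : R := ff R N j * cos (ph R N l * j%:R).
Definition HH (R : realType) N l (j : nat) : R := ff R N j * sin (ph R N l * j%:R).

Lemma ph_shift (R : realType) N l : (0 < N)%N ->
  ph R N l * N%:R = (l.*2.+1)%:R * pi.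
Proof. by move=> hN; rewrite /ph mulrAC thN // mulrC. Qed.

Lemma GG_per (R : realType) N l j : (0 < N)%N -> GG R N l (j + N) = GG R N l j.
Proof.
move=> hN; rewrite /GG ff_per // natrD mulrDr ph_shift // cos_addnpi.
by rewrite -signr_odd /= odd_double /= expr1; ring.
Qed.

Lemma HH_per (R : realType) N l j : (0 < N)%N -> HH R N l (j + N) = HH R N l j.
Proof.
move=> hN; rewrite /HH ff_per // natrD mulrDr ph_shift // sin_addnpi.
by rewrite -signr_odd /= odd_double /= expr1; ring.
Qed.

Lemma GG_refl (R : realType) N l j : (0 < N)%N -> (j <= N)%N ->
  GG R N l (N - j) = - GG R N l j.
Proof.
move=> hN hj; rewrite /GG ff_refl // natrB // mulrBr ph_shift //.
have -> : (l.*2.+1)%:R * pi - ph R N l * j%:R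
   = - (ph R N l * j%:R) + (l.*2.+1)%:R * pi by ring.
by rewrite cos_addnpi cosN -signr_odd /= odd_double /= expr1; ring.
Qed.

Lemma sumGG (R : realType) N l : (0 < N)%N -> \sum_(n < N) GG R N l n = 0.
Proof.
move=> hN.
have h1 := @window R N (GG R N l) (fun j => GG_per R N l j hN) 1.
have h2 : \sum_(n < N) GG R N l n = - \sum_(n < N) GG R N l (1 + n).
  rewrite (reindex_inj rev_ord_inj) /= -sumrN; apply: eq_bigr => n _.
  by rewrite add1n GG_refl.
rewrite h1 in h2; lra.
Qed.
Lemma th_gt0 (R : realType) N : (0 < N)%N -> 0 < th R N.
Proof. by move=> hN; rewrite /th divr_gt0 // ?pi_gt0 // ltr0n. Qed.

Lemma sin_th_gt0 (R : realType) N n : (0 < n)%N -> (n < N)%N ->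
  0 < sin (th R N * n%:R).
Proof.
move=> h0 h1; have hN : (0 < N)%N by apply: leq_ltn_trans h1.
apply: sin_gt0_pi; apply/andP; split.
  by rewrite mulr_gt0 ?th_gt0 // ltr0n.
by rewrite -(thN R N hN) ltr_pM2l ?th_gt0 // ltr_nat.
Qed.

Lemma sumcos (R : realType) N m : (0 < m)%N -> (m < N)%N ->
  \sum_(n < N) cos (th R N * (m.*2)%:R * n%:R) = 0.
Proof.
move=> h0 h1; have hN : (0 < N)%N by apply: leq_ltn_trans h1.
set b := th R N * m%:R.
have hb : 0 < sin b by apply: sin_th_gt0.
pose T (n : nat) := sin (b * (n.*2)%:R - b).
have eT : forall n : nat, cos (th R N * (m.*2)%:R * n%:R) * (2 * sin b)
    = T n.+1 - T n.
  move=> n; rewrite /T.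
  have -> : b * (n.+1.*2)%:R - b = b * (n.*2)%:R + b.
    by rewrite doubleS -addn2 natrD /b; ring.
  rewrite sinD sinB.
  have -> : th R N * (m.*2)%:R * n%:R = b * (n.*2)%:R.
    by rewrite /b -!muln2 !natrM; ring.
  ring.
have : (\sum_(n < N) cos (th R N * (m.*2)%:R * n%:R)) * (2 * sin b) = 0.
  rewrite mulr_suml.
  rewrite -(big_mkord xpredT (fun n : nat => cos (th R N * (m.*2)%:R * n%:R) * (2 * sin b))).
  under eq_bigr => n _ do rewrite eT.
  rewrite telescope_sumr // /T double0 mulr0 sub0r.
  have -> : b * (N.*2)%:R - b = - b + (m.*2)%:R * pi.
    by rewrite /b -(thN R N hN) -!muln2 !natrM; ring.
  by rewrite sin_addnpi -signr_odd odd_double expr0 mul1r subrr.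
move/eqP; rewrite mulf_eq0 => /orP [/eqP //|].
by rewrite mulf_eq0 (gt_eqF hb) orbF pnatr_eq0.
Qed.
Lemma sumHH (R : realType) N l : (l < N)%N ->
  \sum_(n < N) HH R N l n = sin (th R N) * (N%:R - 1 - 2 * l%:R).
Proof.
case: N => [//|M].
elim: l => [|l IH] hl.
  rewrite big_ord_recl /HH ff0 mul0r add0r.
  rewrite (eq_bigr (fun _ => sin (th R M.+1))); last first.
    move=> i _; rewrite /ff /ph /= mulr1 mulfVK //.
    by rewrite gt_eqF //; apply: sin_th_gt0; rewrite /bump /= ?add1n ?ltnS //.
  by rewrite big_const_ord iter_addr_0 -[_ *+ _]mulr_natr -addn1 natrD; ring.
have hl' : (l < M.+1)%N by apply: ltnW.
have -> : \sum_(n < M.+1) HH R M.+1 l.+1 n =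
    \sum_(n < M.+1) HH R M.+1 l n + \sum_(n < M.+1) (HH R M.+1 l.+1 n - HH R M.+1 l n).
  by rewrite -big_split /=; apply: eq_bigr => n _; ring.
rewrite IH //.
have hc := sumcos R M.+1 l.+1 (ltn0Sn _) hl.
rewrite big_ord_recl /= in hc.
rewrite big_ord_recl /HH ff0 !mul0r subrr add0r.
rewrite (eq_bigr (fun i : 'I_M => 2 * sin (th R M.+1) *
     cos (th R M.+1 * (l.+1.*2)%:R * (bump 0 i)%:R))); last first.
  move=> i _; rewrite /ff.
  set x := th R M.+1 * (bump 0 i)%:R.
  have hx : sin x != 0.
    by rewrite gt_eqF //; apply: sin_th_gt0; rewrite /bump /= ?add1n ?ltnS //.
  have -> : ph R M.+1 l.+1 * (bump 0 i)%:R = th R M.+1 * (l.+1.*2)%:R * (bump 0 i)%:R + x.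
    by rewrite /ph /x doubleS -addn1 natrD; ring.
  have -> : ph R M.+1 l * (bump 0 i)%:R = th R M.+1 * (l.+1.*2)%:R * (bump 0 i)%:R - x.
    by rewrite /ph /x doubleS -[l.*2.+2]addn2 -[l.*2.+1]addn1 !natrD; ring.
  rewrite sinD sinB.
  by field.
rewrite -mulr_sumr.
have -> : \sum_(i < M) cos (th R M.+1 * (l.+1.*2)%:R * (bump 0 i)%:R) = -1.
  by rewrite mulr0 cos0 in hc; lra.
rewrite -addn1 natrD; ring.
Qed.
Lemma S_entry (R : realType) N (i j : 'I_N) :
  (S_quant R N) i j = ff R N (j.+1 + i).
Proof.
have hN : (0 < N)%N by apply: leq_ltn_trans (ltn_ord i).
rewrite mxE; case: eqP => h.
  by rewrite (_ : (j.+1 + i)%N = N) ?ffN //; lia.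
rewrite /ff /th (_ : (i.+1 + j.+1 - 1 = j.+1 + i)%N) //; lia.
Qed.

Definition uvec (R : realType) N l : 'rV[R]_N :=
  \row_(j < N) (cos (ph R N l * (j%:R + 2^-1)) + sin (ph R N l * (j%:R + 2^-1))).

Lemma uvec_eig (R : realType) N l : (l < N)%N ->
  uvec R N l *m S_quant R N = (sin (th R N) * (N%:R - 1 - 2 * l%:R)) *: uvec R N l.
Proof.
move=> hl; have hN : (0 < N)%N by apply: leq_ltn_trans hl.
apply/rowP => j; rewrite [LHS]mxE [RHS]mxE [in RHS]mxE.
set r := ph R N l * (j%:R + 2^-1).
rewrite (eq_bigr (fun i : 'I_N => (cos r - sin r) * GG R N l (j.+1 + i)
   + (cos r + sin r) * HH R N l (j.+1 + i))); last first.
  move=> i _; rewrite S_entry [uvec _ _ _ _ _]mxE /GG /HH.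
  have -> : ph R N l * (i%:R + 2^-1) = ph R N l * (j.+1 + i)%:R - r.
    by rewrite /r natrD -addn1 natrD; field.
  rewrite cosB sinB; ring.
rewrite big_split /= -!mulr_sumr.
rewrite (window R N (fun j => GG R N l j) (fun j => GG_per R N l j hN)).
rewrite (window R N (fun j => HH R N l j) (fun j => HH_per R N l j hN)).
rewrite sumGG // sumHH //; ring.
Qed.

Lemma uvec_neq0 (R : realType) N l : (0 < N)%N -> uvec R N l != 0.
Proof.
case: N => [//|M] _; apply/negP => /eqP h.
have h0 := congr1 (fun A : 'rV[R]_M.+1 => A 0 0) h.
have h1 := congr1 (fun A : 'rV[R]_M.+1 => A 0 ord_max) h.
move: h0 h1; rewrite /= !mxE /=.
have -> : ph R M.+1 l * (M%:R + 2^-1) = - (ph R M.+1 l * 2^-1) + (l.*2.+1)%:R * pi.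
  by rewrite -(ph_shift R M.+1 l) // -addn1 natrD; field.
rewrite cos_addnpi sin_addnpi cosN sinN -signr_odd /= odd_double /= expr1 ?add0r.
have := cos2Dsin2 (ph R M.+1 l * 2^-1).
set c := cos _; set s := sin _ => hcs h0 h1.
have hc : c = 0 by lra.
have hs : s = 0 by lra.
by move: hcs; rewrite hc hs expr0n /=; lra.
Qed.

Lemma eig_dir (R : realType) N k : (1 <= k <= N)%N ->
  eigenvalue (S_quant R N) ((N%:R + 1 - 2 * k%:R) * sin (pi / N%:R)).
Proof.
case: k => [//|l] /andP [_ hl].
apply/eigenvalueP; exists (uvec R N l); last by apply: uvec_neq0; lia.
rewrite uvec_eig //; congr (_ *: _); rewrite /th -addn1 natrD; ring.
Qed.

Theorem mainTheorem5 (R : realType) (N : nat) (hN : (1 <= N)%N) (a : R) :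
  eigenvalue (S_quant R N) a <->
  exists2 k : nat, (1 <= k <= N)%N &
    a = (N%:R + 1 - 2 * k%:R) * sin (pi / N%:R).
Proof.
split; last by case=> k hk ->; apply: eig_dir.
pose rs : seq R := [seq (N%:R + 1 - 2 * k%:R) * sin (pi / N%:R) | k <- iota 1 N].
have hroots : all (root (char_poly (S_quant R N))) rs.
  apply/allP => x /mapP [k hk ->]; rewrite -eigenvalue_root_char.
  by apply: eig_dir; rewrite mem_iota in hk; lia.
have huniq : uniq rs.
  case: (ltnP 1 N) => h2.
    have hs0 := sin_th_gt0 R N 1 isT h2; rewrite /th mulr1 in hs0.
    have hs : sin (pi / N%:R) != 0 := lt0r_neq0 hs0.
    rewrite map_inj_in_uniq ?iota_uniq // => k k' _ _ /(mulIf hs) e.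
    have : k%:R = k'%:R :> R by lra.
    by move/eqP; rewrite eqr_nat => /eqP.
  by rewrite /rs (_ : N = 1%N) //; lia.
have [q hq] := uniq_roots_prod_XsubC hroots (eq_ind_r is_true huniq (uniq_rootsE rs)).
rewrite eigenvalue_root_char hq rootM root_prod_XsubC.
have hP : char_poly (S_quant R N) != 0 by apply: monic_neq0; apply: char_poly_monic.
have hq0 : q != 0 by apply: contraNneq hP => e; rewrite hq e mul0r.
have hpr : \prod_(z <- rs) ('X - z%:P) != 0 by apply: monic_neq0; apply: monic_prod_XsubC.
have : size (char_poly (S_quant R N)) = N.+1 by apply: size_char_poly.
rewrite hq size_mul // size_prod_XsubC /rs size_map size_iota => hsz.
rewrite addnS /= in hsz.
have hs1 : size q = 1%N by apply/(@addIn N); rewrite hsz add1n.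
have /size_poly1P [c hc ->] : size q == 1%N by rewrite hs1.
rewrite rootC (negbTE hc) /= => /mapP [k hk ->].
by exists k => //; rewrite mem_iota in hk; lia.
Qed.
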